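(* Fix $a,b,\kappa>0$ and let $p(s)=a+bs$. For $\alpha>0$ set $p_1=\frac{\kappa}{1+\alpha}p$ and $p_2=\alpha p_1$ (i.e. $a_1=\frac{\kappa a}{1+\alpha}$, $b_1=\frac{\kappa b}{1+\alpha}$, $a_2=\alpha a_1$, $b_2=\alpha b_1$). Then there exists $\bar\alpha>0$ such that for every $\alpha>\bar\alpha$, the function $C_1$ defined in the context satisfies $\sup_{\omega\ge0}|C_1(j\omega)|<1$. (Indeed $\sup_\omega|C_1(j\omega)|\to 0$ as $\alpha\to\infty$.)
   Context: For constants $a_1,b_1,a_2,b_2>0$ and complex $s$, set $p_1(s)=a_1+b_1 s$, $p_2(s)=a_2+b_2 s$, $q=p_1+p_2$, and $m(s)=(s^2+q)\sqrt{1-\frac{4p_1p_2}{(s^2+q)^2}}$ with $\sqrt{\cdot}$ the principal complex square root (nonnegative real part), so $m^2=(s^2+q)^2-4p_1p_2$. Define $C_1=\frac{(s^2+q)-m}{2p_2}$. $j$ denotes the imaginary unit. *)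

(* Defs.v *)
From Stdlib Require Import Reals.
Open Scope R_scope.

Definition Cx : Type := (R * R)%type.

Definition RtoC (r : R) : Cx := (r, 0).
Definition Cj : Cx := (0, 1).
Definition Cadd (z w : Cx) : Cx := (fst z + fst w, snd z + snd w).
Definition Csub (z w : Cx) : Cx := (fst z - fst w, snd z - snd w).
Definition Cmul (z w : Cx) : Cx :=
  (fst z * fst w - snd z * snd w, fst z * snd w + snd z * fst w).
Definition Cinv (z : Cx) : Cx :=
  let d := fst z * fst z + snd z * snd z in (fst z / d, - snd z / d).
Definition Cdiv (z w : Cx) : Cx := Cmul z (Cinv w).
Definition Cnorm (z : Cx) : R := sqrt (fst z * fst z + snd z * snd z).
(* principal square root: the root with nonnegative real part
   (and nonnegative imaginary part when the real part is 0) *)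
Definition Csqrt (z : Cx) : Cx :=
  let r := Cnorm z in
  (sqrt ((r + fst z) / 2),
   if Rle_dec 0 (snd z) then sqrt ((r - fst z) / 2)
   else - sqrt ((r - fst z) / 2)).

Definition C1_ctrl (a1 b1 a2 b2 : R) (s : Cx) : Cx :=
  let p1 := Cadd (RtoC a1) (Cmul (RtoC b1) s) in
  let p2 := Cadd (RtoC a2) (Cmul (RtoC b2) s) in
  let q := Cadd p1 p2 in
  let u := Cadd (Cmul s s) q in
  let m := Cmul u (Csqrt (Csub (RtoC 1)
                     (Cdiv (Cmul (RtoC 4) (Cmul p1 p2)) (Cmul u u)))) in
  Cdiv (Csub u m) (Cmul (RtoC 2) p2).

(* Main.v *)
Require Import Defs.
From Stdlib Require Import Reals Lra Psatz.
Open Scope R_scope.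

Lemma Cnorm_mul z w : Cnorm (Cmul z w) = Cnorm z * Cnorm w.
Proof.
  destruct z as [x y], w as [x' y']. unfold Cnorm, Cmul; simpl.
  rewrite <- sqrt_mult by nra. f_equal. ring.
Qed.

Lemma Cnorm_inv z : 0 < Cnorm z -> Cnorm (Cinv z) = / Cnorm z.
Proof.
  destruct z as [x y]. unfold Cnorm, Cinv; simpl. intro H.
  assert (Hd : 0 < x*x+y*y).
  { destruct (Rle_lt_dec (x*x+y*y) 0) as [h|h]; auto.
    assert (x*x+y*y = 0) by nra. rewrite H0, sqrt_0 in H. lra. }
  rewrite <- sqrt_inv. f_equal. field. lra.
Qed.

Lemma Cnorm_div z w : 0 < Cnorm w -> Cnorm (Cdiv z w) = Cnorm z / Cnorm w.
Proof. intro H. unfold Cdiv. rewrite Cnorm_mul, Cnorm_inv by auto. reflexivity. Qed.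

Lemma Cnorm_ge0 z : 0 <= Cnorm z.
Proof. apply sqrt_pos. Qed.

Lemma Cnorm_R r : 0 <= r -> Cnorm (RtoC r) = r.
Proof. intro. unfold Cnorm, RtoC; simpl. replace (r*r+0*0) with (r*r) by ring. apply sqrt_square; auto. Qed.

Lemma Csqrt_sq w : Cmul (Csqrt w) (Csqrt w) = w /\ 0 <= fst (Csqrt w).
Proof.
  destruct w as [x y]. unfold Csqrt, Cmul, Cnorm; simpl.
  set (r := sqrt (x*x+y*y)).
  assert (Hr0 : 0 <= r) by apply sqrt_pos.
  assert (Hr2 : r * r = x*x+y*y) by (apply sqrt_sqrt; nra).
  assert (Hx1 : 0 <= (r + x)/2) by nra.
  assert (Hx2 : 0 <= (r - x)/2) by nra.
  assert (HA := sqrt_sqrt _ Hx1). assert (HB := sqrt_sqrt _ Hx2).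
  assert (HAB : sqrt ((r+x)/2) * sqrt ((r-x)/2) = Rabs y / 2).
  { rewrite <- sqrt_mult by auto.
    replace ((r+x)/2*((r-x)/2)) with ((Rabs y/2)*(Rabs y/2)).
    apply sqrt_square. pose proof (Rabs_pos y); lra.
    assert (Rabs y * Rabs y = y*y) by (rewrite <- Rabs_mult; apply Rabs_right; nra).
    nra. }
  split; [| apply sqrt_pos].
  destruct (Rle_dec 0 y) as [h|h].
  - rewrite Rabs_right in HAB by lra. f_equal; nra.
  - rewrite Rabs_left in HAB by lra. f_equal; nra.
Qed.

Lemma key e : Cnorm (Csub (RtoC 1) (Csqrt (Csub (RtoC 1) e))) <= Cnorm e.
Proof.
  destruct (Csqrt_sq (Csub (RtoC 1) e)) as [Hs Hf].
  set (t := Csqrt (Csub (RtoC 1) e)) in *.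
  assert (E : Cmul (Csub (RtoC 1) t) (Cadd (RtoC 1) t) = e).
  { destruct t as [tx ty], e as [ex ey]. unfold Cmul, Csub, Cadd, RtoC in *; simpl in *.
    assert (h1 := f_equal fst Hs). assert (h2 := f_equal snd Hs). simpl in h1, h2.
    f_equal; nra. }
  assert (H1 : 1 <= Cnorm (Cadd (RtoC 1) t)).
  { destruct t as [tx ty]; unfold Cnorm, Cadd, RtoC; simpl in *.
    apply Rle_trans with (sqrt 1); [rewrite sqrt_1; lra | apply sqrt_le_1_alt; nra]. }
  rewrite <- E, Cnorm_mul. pose proof (Cnorm_ge0 (Csub (RtoC 1) t)). nra.
Qed.

Lemma C1_bound a1 b1 a2 b2 s :
  0 < Cnorm (Cadd (Cmul s s) (Cadd (Cadd (RtoC a1) (Cmul (RtoC b1) s)) (Cadd (RtoC a2) (Cmul (RtoC b2) s)))) ->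
  0 < Cnorm (Cadd (RtoC a2) (Cmul (RtoC b2) s)) ->
  Cnorm (C1_ctrl a1 b1 a2 b2 s) <=
    2 * Cnorm (Cadd (RtoC a1) (Cmul (RtoC b1) s)) /
    Cnorm (Cadd (Cmul s s) (Cadd (Cadd (RtoC a1) (Cmul (RtoC b1) s)) (Cadd (RtoC a2) (Cmul (RtoC b2) s)))).
Proof.
  unfold C1_ctrl.
  set (p1 := Cadd (RtoC a1) (Cmul (RtoC b1) s)).
  set (p2 := Cadd (RtoC a2) (Cmul (RtoC b2) s)).
  set (u := Cadd (Cmul s s) (Cadd p1 p2)).
  cbv zeta. fold p1 p2. fold u. intros Hu Hp2.
  set (e := Cdiv (Cmul (RtoC 4) (Cmul p1 p2)) (Cmul u u)).
  set (t := Csqrt (Csub (RtoC 1) e)).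
  assert (E : Csub u (Cmul u t) = Cmul u (Csub (RtoC 1) t)).
  { destruct u, t; unfold Csub, Cmul, RtoC; simpl; f_equal; ring. }
  assert (H2 : 0 < Cnorm (Cmul (RtoC 2) p2)) by (rewrite Cnorm_mul, Cnorm_R; lra).
  rewrite E, Cnorm_div, Cnorm_mul by auto.
  assert (Hk := key e). fold t in Hk.
  assert (He : Cnorm e = 4 * (Cnorm p1 * Cnorm p2) / (Cnorm u * Cnorm u)).
  { unfold e. rewrite Cnorm_div, !Cnorm_mul, Cnorm_R by (try lra; rewrite Cnorm_mul; nra). reflexivity. }
  rewrite Cnorm_mul, Cnorm_R in * by lra.
  rewrite He in Hk.
  pose proof (Cnorm_ge0 p1). pose proof (Cnorm_ge0 (Csub (RtoC 1) t)).
  apply Rle_trans with (Cnorm u * (4 * (Cnorm p1 * Cnorm p2) / (Cnorm u * Cnorm u)) / (2 * Cnorm p2)).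
  - unfold Rdiv. apply Rmult_le_compat_r.
    + apply Rlt_le, Rinv_0_lt_compat; lra.
    + apply Rmult_le_compat_l; lra.
  - right. field. lra.
Qed.
Theorem lemma2 (a b kappa : R) (ha : 0 < a) (hb : 0 < b) (hk : 0 < kappa)   :
  (exists abar : R, 0 < abar /\
    forall alpha : R, abar < alpha ->
      exists c : R, c < 1 /\
        forall omega : R, 0 <= omega ->
          Cnorm (C1_ctrl (kappa * a / (1 + alpha)) (kappa * b / (1 + alpha))
                    (alpha * (kappa * a / (1 + alpha)))
                    (alpha * (kappa * b / (1 + alpha)))
                    (Cmul Cj (RtoC omega))) <= c)%R.
Proof.
  set (K := 4 + 4 * a / (b * b * kappa)).
  assert (HK4 : 4 <= K).
  { unfold K. assert (0 < 4 * a / (b*b*kappa)). { apply Rdiv_lt_0_compat. lra. apply Rmult_lt_0_compat; nra. } lra. }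
  assert (HKe : K * (b*b*kappa) = 4*b*b*kappa + 4*a).
  { unfold K. field. split; lra. }
  assert (HKineq : forall w, kappa*kappa*(a*a+b*b*(w*w)) <=
                     K * ((kappa*a - w*w)*(kappa*a-w*w) + (kappa*b*w)*(kappa*b*w))).
  { intro w. destruct (Rle_dec (w*w) (kappa*a/2)) as [h|h].
    - assert ((kappa*a-w*w)*(kappa*a-w*w) >= kappa*kappa*a*a/4) by nra.
      assert (0 <= (kappa*b*w)*(kappa*b*w)) by nra. nra.
    - assert (Hw : kappa*a/2 <= w*w) by lra.
      assert (E : K*((kappa*b*w)*(kappa*b*w)) = kappa*(w*w)*(K*(b*b*kappa))) by ring.
      rewrite HKe in E.
      assert (0 <= (kappa*a - w*w)*(kappa*a-w*w)) by (pose proof (Rle_0_sqr (kappa*a - w*w)); unfold Rsqr in *; lra).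
      assert (kappa*(w*w)*(4*a) >= 2*kappa*kappa*a*a).
      { assert (0 < 4*kappa*a) by nra.
        assert (h2 := Rmult_le_compat_l _ _ _ (Rlt_le _ _ H0) Hw). lra. }
      assert (0 <= kappa*kappa*b*b*(w*w)) by (apply Rmult_le_pos; nra).
      nra. }
  exists (4*K). split; [lra|]. intros alpha Hal.
  exists (1/2). split; [lra|]. intros omega Hom.
  assert (H1a : 0 < 1 + alpha) by lra.
  eapply Rle_trans; [apply C1_bound|].
  - assert (E : Cnorm (Cadd (Cmul (Cmul Cj (RtoC omega)) (Cmul Cj (RtoC omega)))
     (Cadd (Cadd (RtoC (kappa * a / (1 + alpha))) (Cmul (RtoC (kappa * b / (1 + alpha))) (Cmul Cj (RtoC omega))))
        (Cadd (RtoC (alpha * (kappa * a / (1 + alpha)))) (Cmul (RtoC (alpha * (kappa * b / (1 + alpha)))) (Cmul Cj (RtoC omega))))))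
      = sqrt ((kappa*a - omega*omega)*(kappa*a-omega*omega) + (kappa*b*omega)*(kappa*b*omega))).
    { unfold Cnorm; f_equal; simpl; field; lra. }
    rewrite E. apply sqrt_lt_R0. specialize (HKineq omega).
    assert (0 < kappa*kappa*(a*a+b*b*(omega*omega))) by (apply Rmult_lt_0_compat; nra).
    nra.
  - unfold Cnorm; simpl. apply sqrt_lt_R0.
    assert (0 < alpha * (kappa * a / (1 + alpha))).
    { apply Rmult_lt_0_compat. lra. apply Rdiv_lt_0_compat; nra. }
    match goal with |- 0 < ?x * ?x + ?y * ?y =>
      replace x with (alpha * (kappa * a / (1 + alpha))) by ring;
      assert (0 <= y*y) by nra end.
    nra.
  - set (Y := (kappa*a - omega*omega)*(kappa*a-omega*omega) + (kappa*b*omega)*(kappa*b*omega)).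
    set (X := (kappa/(1+alpha))*(kappa/(1+alpha))*(a*a+b*b*(omega*omega))).
    match goal with |- 2 * ?P / ?U <= _ =>
      assert (EP : P = sqrt X) by (unfold Cnorm, X; f_equal; simpl; field; lra);
      assert (EU : U = sqrt Y) by (unfold Cnorm, Y; f_equal; simpl; field; lra) end.
    rewrite EP, EU.
    specialize (HKineq omega).
    assert (Hpos : 0 < kappa*kappa*(a*a+b*b*(omega*omega))) by (apply Rmult_lt_0_compat; nra).
    assert (HY : 0 < Y) by (unfold Y; nra).
    assert (HX : 16 * X <= Y).
    { unfold X.
      replace (16 * (kappa / (1 + alpha) * (kappa / (1 + alpha)) * (a * a + b * b * (omega * omega))))
        with (16 * (kappa*kappa*(a*a+b*b*(omega*omega))) / ((1+alpha)*(1+alpha))) by (field; lra).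
      apply Rle_trans with (16 * K * Y / ((1+alpha)*(1+alpha))).
      - unfold Rdiv. apply Rmult_le_compat_r. apply Rlt_le, Rinv_0_lt_compat; nra.
        fold Y in HKineq. lra.
      - apply (Rmult_le_reg_r ((1+alpha)*(1+alpha))). nra.
        unfold Rdiv. rewrite Rmult_assoc, Rinv_l by nra.
        assert (h16 : 16*K <= (1+alpha)*(1+alpha)) by nra.
        assert (h := Rmult_le_compat_l _ _ _ (Rlt_le _ _ HY) h16). lra. }
    assert (HsY : 0 < sqrt Y) by (apply sqrt_lt_R0; auto).
    assert (Hs : sqrt (16 * X) <= sqrt Y) by (apply sqrt_le_1_alt; auto).
    rewrite sqrt_mult_alt in Hs by lra.
    replace (sqrt 16) with 4 in Hs by (replace 16 with (4*4) by ring; rewrite sqrt_square; lra).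
    apply (Rmult_le_reg_r (sqrt Y)); auto.
    unfold Rdiv. rewrite Rmult_assoc, Rinv_l by lra. lra.
Qed.
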